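(* For every integer $N\ge 1$, the number of tuples $(\mu_1,\dots,\mu_4;d_1,\dots,d_4)\in P^4\times\mathbb Z^4$ with $d_1+d_2+d_3+d_4$ odd and $$6\sum_{i=1}^4|\mu_i|+6\sum_{i=1}^4\binom{d_i}{2}+d_1+d_2+3d_3+3d_4=N$$ equals the number of tuples $(\alpha_1,\dots,\alpha_4;e_1,\dots,e_4)\in P^4\times\mathbb Z^4$ with $e_1+e_2+e_3+e_4$ odd and $$6\sum_{i=1}^4|\alpha_i|+6\sum_{i=1}^4\binom{e_i}{2}+0e_1+0e_2+2e_3+2e_4+1=N.$$
   Context: $P$ denotes the set of all integer partitions into positive parts (including the empty partition); for a partition $\lambda$, $|\lambda|$ is the sum of its parts. For $d\in\mathbb Z$, $\binom{d}{2}=d(d-1)/2$. *)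

(* Defs.v *)
From HB Require Import structures.
From mathcomp Require Import all_boot all_order all_algebra.
Set Implicit Arguments. Unset Strict Implicit. Unset Printing Implicit Defensive.
Import Order.TTheory GRing.Theory Num.Theory.

Definition is_partition (s : seq nat) : bool :=
  sorted geq s && all (fun x => 0 < x)%N s.

Definition psize (s : seq nat) : nat := sumn s.

(* binom(d,2) = d(d-1)/2 for d : int (exact division) *)
Definition binom2 (d : int) : int := ((d * (d - 1)) %/ 2)%Z.

Definition has_card (T : eqType) (P : T -> Prop) (n : nat) : Prop :=
  exists s : seq T, [/\ uniq s, size s = n & forall x, x \in s <-> P x].

(* Tuples (mu_1..mu_4 ; d_1..d_4), indices 1..4 represented by 'I_4 = 0..3 *)
Definition tup := ({ffun 'I_4 -> seq nat} * {ffun 'I_4 -> int})%type.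

Local Open Scope ring_scope.

Definition LHS_set (N : nat) (x : tup) : Prop :=
  let mu := x.1 in let d := x.2 in
  [/\ forall i, is_partition (mu i),
      ~~ (2 %| \sum_(i < 4) d i)%Z &
      6 * (\sum_(i < 4) (psize (mu i))%:Z) + 6 * (\sum_(i < 4) binom2 (d i))
        + d 0 + d 1 + 3 * d 2 + 3 * d 3 = N%:Z ].

Definition RHS_set (N : nat) (x : tup) : Prop :=
  let al := x.1 in let e := x.2 in
  [/\ forall i, is_partition (al i),
      ~~ (2 %| \sum_(i < 4) e i)%Z &
      6 * (\sum_(i < 4) (psize (al i))%:Z) + 6 * (\sum_(i < 4) binom2 (e i))
        + 0 * e 0 + 0 * e 1 + 2 * e 2 + 2 * e 3 + 1 = N%:Z ].

(* Main.v *)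
Require Import Defs.
From HB Require Import structures.
From mathcomp Require Import all_boot all_order all_algebra.
From Stdlib Require Import ClassicalEpsilon.
From mathcomp Require Import zify ring.
Import Order.TTheory GRing.Theory Num.Theory.
Section PartA.
Local Open Scope ring_scope.
Lemma b2 (x : int) : 6 * binom2 x = 3 * x * (x - 1).
Proof.
rewrite /binom2.
have h : (2 %| x * (x - 1))%Z.
  have [hx|hx] : (2 %| x)%Z \/ (2 %| x - 1)%Z by lia.
    by apply: dvdz_mulr.
  by apply: dvdz_mull.
have := divzK h. lia.
Qed.

Lemma sum4 (f : 'I_4 -> int) : \sum_(i < 4) f i = f 0 + f 1 + f 2 + f 3.
Proof.
rewrite !big_ord_recl big_ord0 addr0 !addrA.
by congr (_ + _ + _ + _); congr (f _); apply/val_inj.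
Qed.

Lemma ffun4 (f g : {ffun 'I_4 -> int}) :
  f 0 = g 0 -> f 1 = g 1 -> f 2 = g 2 -> f 3 = g 3 -> f = g.
Proof.
move=> h0 h1 h2 h3; apply/ffunP => i; case: i => [[|[|[|[|m]]]] Hi] //.
- by have -> : Ordinal Hi = 0 by apply/val_inj.
- by have -> : Ordinal Hi = 1 by apply/val_inj.
- by have -> : Ordinal Hi = 2 by apply/val_inj.
- by have -> : Ordinal Hi = 3 by apply/val_inj.
Qed.

Lemma q1 (x : int) : 0 <= 6 * binom2 x + x /\ x <= 6 * binom2 x + x /\ - x <= 6 * binom2 x + x.
Proof. rewrite b2. have [h|h] : x <= 0 \/ 1 <= x by lia. all: nia. Qed.
Lemma q3 (x : int) : 0 <= 6 * binom2 x + 3 * x /\ x <= 6 * binom2 x + 3 * x /\ - x <= 6 * binom2 x + 3 * x.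
Proof. rewrite b2. have [h|h] : x <= 0 \/ 1 <= x by lia. all: nia. Qed.

Definition ph0 (d0 d1 d2 d3 : int) : int := ((1 + (d0 - d1 + d2 - d3)) %/ 2)%Z.
Definition ph1 (d0 d1 d2 d3 : int) : int := ((1 - (d0 - d1 - d2 + d3)) %/ 2)%Z.
Definition ph2 (d0 d1 d2 d3 : int) : int := ((1 - (d0 + d1 + d2 + d3)) %/ 2)%Z.
Definition ph3 (d0 d1 d2 d3 : int) : int := ((1 - (d0 + d1 - d2 - d3)) %/ 2)%Z.
Definition ps0 (e0 e1 e2 e3 : int) : int := ((e0 - e1 - e2 - e3 + 1) %/ 2)%Z.
Definition ps1 (e0 e1 e2 e3 : int) : int := ((1 - e0 + e1 - e2 - e3) %/ 2)%Z.
Definition ps2 (e0 e1 e2 e3 : int) : int := ((e0 + e1 - e2 + e3 - 1) %/ 2)%Z.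
Definition ps3 (e0 e1 e2 e3 : int) : int := ((1 - e0 - e1 - e2 + e3) %/ 2)%Z.

Lemma fwd (P d0 d1 d2 d3 : int) (M : int) :
  ~~ (2 %| d0 + d1 + d2 + d3)%Z ->
  6 * P + 6 * (binom2 d0 + binom2 d1 + binom2 d2 + binom2 d3) + d0 + d1 + 3 * d2 + 3 * d3 = M ->
  let e0 := ph0 d0 d1 d2 d3 in let e1 := ph1 d0 d1 d2 d3 in
  let e2 := ph2 d0 d1 d2 d3 in let e3 := ph3 d0 d1 d2 d3 in
  [/\ ~~ (2 %| e0 + e1 + e2 + e3)%Z,
   6 * P + 6 * (binom2 e0 + binom2 e1 + binom2 e2 + binom2 e3) + 0 * e0 + 0 * e1 + 2 * e2 + 2 * e3 + 1 = M,
   ps0 e0 e1 e2 e3 = d0, ps1 e0 e1 e2 e3 = d1 & (ps2 e0 e1 e2 e3 = d2 /\ ps3 e0 e1 e2 e3 = d3)].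
Proof.
move=> hS H e0 e1 e2 e3.
have [k hk] : exists k, d0 + d1 + d2 + d3 = 2 * k + 1.
  by exists ((d0 + d1 + d2 + d3 - 1) %/ 2)%Z; lia.
have he0 : e0 = k + 1 - d1 - d3 by rewrite /e0 /ph0; lia.
have he1 : e1 = - k + d1 + d2 by rewrite /e1 /ph1; lia.
have he2 : e2 = - k by rewrite /e2 /ph2; lia.
have he3 : e3 = - k + d2 + d3 by rewrite /e3 /ph3; lia.
have hd0 : d0 = 2 * k + 1 - d1 - d2 - d3 by lia.
rewrite /ps0 /ps1 /ps2 /ps3 he0 he1 he2 he3; split; [lia| |lia|lia|lia].
rewrite -H !mulrDr !b2 hd0; ring.
Qed.

Lemma bwd (P e0 e1 e2 e3 : int) (M : int) :
  ~~ (2 %| e0 + e1 + e2 + e3)%Z ->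
  6 * P + 6 * (binom2 e0 + binom2 e1 + binom2 e2 + binom2 e3) + 0 * e0 + 0 * e1 + 2 * e2 + 2 * e3 + 1 = M ->
  let d0 := ps0 e0 e1 e2 e3 in let d1 := ps1 e0 e1 e2 e3 in
  let d2 := ps2 e0 e1 e2 e3 in let d3 := ps3 e0 e1 e2 e3 in
  [/\ ~~ (2 %| d0 + d1 + d2 + d3)%Z,
   6 * P + 6 * (binom2 d0 + binom2 d1 + binom2 d2 + binom2 d3) + d0 + d1 + 3 * d2 + 3 * d3 = M,
   ph0 d0 d1 d2 d3 = e0, ph1 d0 d1 d2 d3 = e1 & (ph2 d0 d1 d2 d3 = e2 /\ ph3 d0 d1 d2 d3 = e3)].
Proof.
move=> hS H d0 d1 d2 d3.
have [k hk] : exists k, e0 + e1 + e2 + e3 = 2 * k + 1.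
  by exists ((e0 + e1 + e2 + e3 - 1) %/ 2)%Z; lia.
have hd0 : d0 = k + 1 - e1 - e2 - e3 by rewrite /d0 /ps0; lia.
have hd1 : d1 = - k + e1 by rewrite /d1 /ps1; lia.
have hd2 : d2 = k - e2 by rewrite /d2 /ps2; lia.
have hd3 : d3 = - k + e3 by rewrite /d3 /ps3; lia.
have he0 : e0 = 2 * k + 1 - e1 - e2 - e3 by lia.
rewrite /ph0 /ph1 /ph2 /ph3 hd0 hd1 hd2 hd3; split; [lia| |lia|lia|lia].
rewrite -H !mulrDr !b2 he0; ring.
Qed.

Lemma boundL (p0 p1 p2 p3 d0 d1 d2 d3 : int) (M : int) :
  0 <= p0 -> 0 <= p1 -> 0 <= p2 -> 0 <= p3 ->
  6 * (p0 + p1 + p2 + p3) + 6 * (binom2 d0 + binom2 d1 + binom2 d2 + binom2 d3)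
    + d0 + d1 + 3 * d2 + 3 * d3 = M ->
  [/\ (- M <= d0 /\ d0 <= M), (- M <= d1 /\ d1 <= M), (- M <= d2 /\ d2 <= M),
      (- M <= d3 /\ d3 <= M) &
      [/\ p0 <= M, p1 <= M, p2 <= M & p3 <= M]].
Proof.
have [a0 [a1 a2]] := q1 d0. have [b0 [b1 b2]] := q1 d1.
have [c0 [c1 c2]] := q3 d2. have [g0 [g1 g2]] := q3 d3.
move=> h0 h1 h2 h3 H.
move: (binom2 d0) (binom2 d1) (binom2 d2) (binom2 d3) H a0 a1 a2 b0 b1 b2 c0 c1 c2 g0 g1 g2 => x0 x1 x2 x3 *.
split; [lia|lia|lia|lia|split; lia].
Qed.
End PartA.
Lemma fin_card (T : eqType) (P : T -> Prop) (L : seq T) :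
  (forall x, P x -> x \in L) -> exists n, has_card P n.
Proof.
move=> hL.
pose b x := if excluded_middle_informative (P x) then true else false.
exists (size (undup [seq x <- L | b x])); exists (undup [seq x <- L | b x]).
split; [exact: undup_uniq | by [] |] => x.
rewrite mem_undup mem_filter /b; case: excluded_middle_informative => //= hx.
split=> // _; exact: hL.
Qed.

Fixpoint seqs (N k : nat) : seq (seq nat) :=
  if k is k'.+1 then [::] :: [seq a :: s | a <- iota 0 N.+1, s <- seqs N k']
  else [:: [::]].

Lemma seqs_mem N k s : size s <= k -> all (fun x => x <= N) s -> s \in seqs N k.
Proof.
elim: k s => [|k IH] [|a s] //; try by rewrite /= ?in_cons ?eqxx.
move=> hs /andP [ha has]; rewrite in_cons; apply/orP; right.
apply: (@allpairs_f _ _ _ (fun a s => a :: s) _ _ a s); first by rewrite mem_iota; lia.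
exact: IH.
Qed.

Lemma part_bound s : all (fun x => 0 < x) s -> size s <= sumn s /\ all (fun x => x <= sumn s) s.
Proof.
elim: s => [|a s IH] //= /andP [ha hs]; have [h1 h2] := IH hs; split; first lia.
apply/andP; split; first lia.
apply/allP => x hx; have := allP h2 x hx; lia.
Qed.

Definition LF (T : eqType) (x0 : T) (L : seq T) : seq {ffun 'I_4 -> T} :=
  [seq [ffun i => nth x0 L (h i)] | h : {ffun 'I_4 -> 'I_(size L)} <- enum {ffun 'I_4 -> 'I_(size L)}].

Arguments LF {T}.
Lemma LF_mem (T : eqType) (x0 : T) (L : seq T) (f : {ffun 'I_4 -> T}) :
  (forall i, f i \in L) -> f \in LF x0 L.
Proof.
move=> hf.
have H : forall i, index (f i) L < size L by move=> i; rewrite index_mem.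
apply/mapP; exists [ffun i => Ordinal (H i)]; first by rewrite mem_enum.
by apply/ffunP => i; rewrite !ffunE /= nth_index.
Qed.
Local Open Scope ring_scope.
Definition phid (d : {ffun 'I_4 -> int}) : {ffun 'I_4 -> int} :=
  [ffun i : 'I_4 => match nat_of_ord i with
    | 0%N => ph0 (d 0) (d 1) (d 2) (d 3)
    | 1%N => ph1 (d 0) (d 1) (d 2) (d 3)
    | 2%N => ph2 (d 0) (d 1) (d 2) (d 3)
    | _ => ph3 (d 0) (d 1) (d 2) (d 3) end].
Definition psid (d : {ffun 'I_4 -> int}) : {ffun 'I_4 -> int} :=
  [ffun i : 'I_4 => match nat_of_ord i with
    | 0%N => ps0 (d 0) (d 1) (d 2) (d 3)
    | 1%N => ps1 (d 0) (d 1) (d 2) (d 3)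
    | 2%N => ps2 (d 0) (d 1) (d 2) (d 3)
    | _ => ps3 (d 0) (d 1) (d 2) (d 3) end].

Definition phi (x : tup) : tup := (x.1, phid x.2).
Definition psi (x : tup) : tup := (x.1, psid x.2).

Lemma phidE d : [/\ phid d 0 = ph0 (d 0) (d 1) (d 2) (d 3), phid d 1 = ph1 (d 0) (d 1) (d 2) (d 3),
   phid d 2 = ph2 (d 0) (d 1) (d 2) (d 3) & phid d 3 = ph3 (d 0) (d 1) (d 2) (d 3)].
Proof. by rewrite !ffunE. Qed.
Lemma psidE d : [/\ psid d 0 = ps0 (d 0) (d 1) (d 2) (d 3), psid d 1 = ps1 (d 0) (d 1) (d 2) (d 3),
   psid d 2 = ps2 (d 0) (d 1) (d 2) (d 3) & psid d 3 = ps3 (d 0) (d 1) (d 2) (d 3)].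
Proof. by rewrite !ffunE. Qed.

Lemma fwd_tup N x : LHS_set N x -> RHS_set N (phi x) /\ psi (phi x) = x.
Proof.
case: x => mu d [hp hS H]; rewrite /= in hp hS H *.
rewrite !sum4 in hS H.
have [h1 h2 h3 h4 [h5 h6]] := fwd _ _ _ _ _ _ hS H.
have [e0 e1 e2 e3] := phidE d.
split; first split => //.
- by rewrite sum4 e0 e1 e2 e3.
- by rewrite !sum4 e0 e1 e2 e3.
congr (_, _); have [f0 f1 f2 f3] := psidE (phid d).
by apply: ffun4; rewrite ?f0 ?f1 ?f2 ?f3 e0 e1 e2 e3.
Qed.

Lemma bwd_tup N x : RHS_set N x -> LHS_set N (psi x) /\ phi (psi x) = x.
Proof.
case: x => mu d [hp hS H]; rewrite /= in hp hS H *.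
rewrite !sum4 in hS H.
have [h1 h2 h3 h4 [h5 h6]] := bwd _ _ _ _ _ _ hS H.
have [e0 e1 e2 e3] := psidE d.
split; first split => //.
- by rewrite sum4 e0 e1 e2 e3.
- by rewrite !sum4 e0 e1 e2 e3.
congr (_, _); have [f0 f1 f2 f3] := phidE (psid d).
by apply: ffun4; rewrite ?f0 ?f1 ?f2 ?f3 e0 e1 e2 e3.
Qed.

Lemma ord4P (P : 'I_4 -> Prop) : P 0 -> P 1 -> P 2 -> P 3 -> forall i, P i.
Proof.
move=> h0 h1 h2 h3 [[|[|[|[|m]]]] Hi] //.
- by have -> : Ordinal Hi = 0 by apply/val_inj.
- by have -> : Ordinal Hi = 1 by apply/val_inj.
- by have -> : Ordinal Hi = 2 by apply/val_inj.
- by have -> : Ordinal Hi = 3 by apply/val_inj.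
Qed.

Definition Ld (N : nat) : seq int := [seq (k%:Z - N%:Z) | k <- iota 0 (N + N).+1].
Definition Ltup (N : nat) : seq tup :=
  [seq (m, d) | m <- LF [::] (seqs N N), d <- LF 0 (Ld N)].

Lemma LHS_in N x : LHS_set N x -> x \in Ltup N.
Proof.
case: x => mu d [hp hS H]; rewrite /= in hp hS H.
rewrite !sum4 in H.
have [[l0 u0] [l1 u1] [l2 u2] [l3 u3] [m0 m1 m2 m3]] :=
  boundL _ _ _ _ _ _ _ _ _ (le0z_nat _) (le0z_nat _) (le0z_nat _) (le0z_nat _) H.
have hd : forall i, (- N%:Z <= d i) /\ (d i <= N%:Z).
  by apply: ord4P; split; assumption.
have hm : forall i, (psize (mu i) <= N)%N.
  by apply: ord4P; rewrite -lez_nat; assumption.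
apply: (allpairs_f (fun m d => (m, d))).
- apply: LF_mem => i.
  have /andP [_ hpos] := hp i.
  have [s1 s2] := @part_bound _ hpos.
  have hmi := hm i; rewrite /psize in hmi.
  apply: seqs_mem; first exact: leq_trans s1 hmi.
  by apply/allP => y hy; exact: leq_trans (allP s2 y hy) hmi.
- apply: LF_mem => i; have [ll1 ll2] := hd i; clear -ll1 ll2.
  apply/mapP; exists (absz (d i + N%:Z)); first by rewrite mem_iota leq0n add0n /=; move: (d i) ll1 ll2 => x *; lia.
  move: (d i) ll1 ll2 => x *; lia.
Qed.

Theorem lemma3p5 (N : nat) (hN : (1 <= N)%N) :
  exists n : nat, has_card (LHS_set N) n /\ has_card (RHS_set N) n.
Proof.
have [n [s [us ss hs]]] := @fin_card _ _ _ (@LHS_in N).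
exists n; split; first by exists s.
exists (map phi s); split.
- rewrite map_inj_in_uniq // => x y hx hy hxy.
  have [_ <-] := fwd_tup _ _ (iffLR (hs x) hx).
  have [_ <-] := fwd_tup _ _ (iffLR (hs y) hy).
  by rewrite hxy.
- by rewrite size_map.
- move=> x; split.
    by case/mapP => y hy ->; have [] := fwd_tup _ _ (iffLR (hs y) hy).
  move=> hx; have [h1 h2] := bwd_tup _ _ hx.
  by apply/mapP; exists (psi x) => //; apply/hs.
Qed.
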